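(* Let $p,q\geq 2$ be relatively prime integers. Then $\mathrm{real}_{pq}(G_{p,q}(\mathrm{config}_{pq}(\xi)))=p\xi$ for all real $\xi\geq 0$.
   Context: For an integer $n>1$, $A_n=\{0,1,\dots,n-1\}$. For real $\xi\geq0$, let $\xi=\sum_{i\in\mathbb{Z}}\xi_i n^i$ be the unique base-$n$ expansion with $\xi_i\in A_n$ and $\xi_i\neq n-1$ for infinitely many $i<0$; define $\mathrm{config}_n(\xi)\in A_n^{\mathbb{Z}}$ by $\mathrm{config}_n(\xi)(i)=\xi_{-i}$. For $c\in A_n^{\mathbb{Z}}$ with $c(i)=0$ for all sufficiently small $i$, $\mathrm{real}_n(c)=\sum_{i\in\mathbb{Z}}c(-i)n^i$. Define $g_{p,q}:A_{pq}\times A_{pq}\to A_{pq}$ by writing $x=x_1q+x_0$, $y=y_1q+y_0$ with $x_0,y_0\in A_q$, $x_1,y_1\in A_p$ (uniquely), and setting $g_{p,q}(x,y)=x_0p+y_1$; and $G_{p,q}:A_{pq}^{\mathbb{Z}}\to A_{pq}^{\mathbb{Z}}$ by $G_{p,q}(c)(i)=g_{p,q}(c(i),c(i+1))$. *)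

(* Defs.v *)
From Stdlib Require Import Reals Lra Lia ZArith Arith ClassicalEpsilon.
From Coquelicot Require Import Coquelicot.
Open Scope R_scope.

Definition zsum (a : Z -> R) (M : nat) : R :=
  sum_f_R0 (fun k => a (Z.of_nat k - Z.of_nat M)%Z) (2 * M).

Definition digit_terms (n : nat) (d : Z -> nat) (i : Z) : R :=
  INR (d i) * powerRZ (INR n) i.

Definition is_expansion (n : nat) (xi : R) (d : Z -> nat) : Prop :=
  (forall i, (d i < n)%nat) /\
  (forall N : Z, exists i : Z, (i < N)%Z /\ (i < 0)%Z /\ d i <> (n - 1)%nat) /\
  is_lim_seq (zsum (digit_terms n d)) xi.

Definition digits (n : nat) (xi : R) : Z -> nat :=
  epsilon (inhabits (fun _ : Z => 0%nat)) (is_expansion n xi).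

Definition config (n : nat) (xi : R) : Z -> nat :=
  fun i => digits n xi (- i)%Z.

Definition real_n (n : nat) (c : Z -> nat) : R :=
  real (Lim_seq (zsum (digit_terms n (fun i => c (- i)%Z)))).

Definition g (p q : nat) (x y : nat) : nat :=
  (x mod q) * p + y / q.

Definition G (p q : nat) (c : Z -> nat) : Z -> nat :=
  fun i => g p q (c i) (c (i + 1)%Z).

(* Main.v *)
Require Import Defs.
From Stdlib Require Import Reals Lra Lia ZArith Arith ClassicalEpsilon.
From Coquelicot Require Import Coquelicot.
Open Scope R_scope.

Lemma sum_shift (f : nat -> R) N :
  sum_f_R0 f (S N) = f O + sum_f_R0 (fun k => f (S k)) N.
Proof. induction N. simpl. ring. rewrite tech5, IHN, tech5. ring. Qed.

Lemma zsum_S a M : zsum a (S M) =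
  a (- (Z.of_nat M + 1))%Z + zsum a M + a (Z.of_nat M + 1)%Z.
Proof.
  unfold zsum.
  replace (2 * S M)%nat with (S (S (2 * M))) by lia.
  rewrite tech5, sum_shift.
  replace (Z.of_nat 0 - Z.of_nat (S M))%Z with (- (Z.of_nat M + 1))%Z by lia.
  replace (Z.of_nat (S (S (2 * M))) - Z.of_nat (S M))%Z with (Z.of_nat M + 1)%Z by lia.
  f_equal. f_equal. apply sum_eq. intros i _. f_equal. lia.
Qed.

Lemma zsum_0 a : zsum a 0 = a 0%Z.
Proof. reflexivity. Qed.

Lemma zsum_ext a b M : (forall i, a i = b i) -> zsum a M = zsum b M.
Proof. intros H. unfold zsum. apply sum_eq. intros; apply H. Qed.

Lemma zsum_plus a b M : zsum (fun i => a i + b i) M = zsum a M + zsum b M.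
Proof. induction M. rewrite !zsum_0; ring. rewrite !zsum_S, IHM. ring. Qed.

Lemma zsum_scal c a M : zsum (fun i => c * a i) M = c * zsum a M.
Proof. induction M. rewrite !zsum_0; ring. rewrite !zsum_S, IHM. ring. Qed.

Lemma zsum_shift a M : zsum (fun i => a (i - 1)%Z) M =
  zsum a M + a (- Z.of_nat M - 1)%Z - a (Z.of_nat M).
Proof.
  induction M.
  - rewrite !zsum_0. simpl. ring.
  - rewrite !zsum_S, IHM.
    replace (- (Z.of_nat M + 1) - 1)%Z with (- Z.of_nat (S M) - 1)%Z by lia.
    replace (Z.of_nat M + 1 - 1)%Z with (Z.of_nat M) by lia.
    replace (- Z.of_nat M - 1)%Z with (- (Z.of_nat M + 1))%Z by lia.
    replace (Z.of_nat (S M)) with (Z.of_nat M + 1)%Z by lia. ring.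
Qed.

Lemma zsum_tele h M : zsum (fun i => h i - h (i + 1)%Z) M =
  h (- Z.of_nat M)%Z - h (Z.of_nat M + 1)%Z.
Proof.
  induction M.
  - rewrite !zsum_0. simpl. ring.
  - rewrite !zsum_S, IHM.
    replace (- (Z.of_nat M + 1) + 1)%Z with (- Z.of_nat M)%Z by lia.
    replace (Z.of_nat M + 1 + 1)%Z with (Z.of_nat (S M) + 1)%Z by lia.
    replace (- (Z.of_nat M + 1))%Z with (- Z.of_nat (S M))%Z by lia. ring.
Qed.

Lemma fl_le r : IZR (Int_part r) <= r.
Proof. apply base_Int_part. Qed.
Lemma fl_gt r : r < IZR (Int_part r) + 1.
Proof. destruct (base_Int_part r). lra. Qed.
Lemma fl_max z r : IZR z <= r -> (z <= Int_part r)%Z.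
Proof.
  intros H. pose proof (fl_gt r).
  assert (IZR z < IZR (Int_part r + 1)) by (rewrite plus_IZR; simpl; lra).
  apply lt_IZR in H1. lia.
Qed.
Lemma fl_zero r : 0 <= r < 1 -> Int_part r = 0%Z.
Proof.
  intros [H1 H2]. pose proof (fl_max 0 r H1) as A1. pose proof (fl_le r) as A2.
  assert (A3 : IZR (Int_part r) < IZR 1) by lra. apply lt_IZR in A3. lia.
Qed.

Lemma digit_bound n y : (2 <= n)%nat ->
  (0 <= Int_part (y * INR n) - Z.of_nat n * Int_part y <= Z.of_nat n - 1)%Z.
Proof.
  intros hn. assert (hb : 2 <= INR n) by (apply (le_INR 2); lia).
  pose proof (fl_le y). pose proof (fl_gt y).
  split.
  - assert (Z.of_nat n * Int_part y <= Int_part (y * INR n))%Z; [|lia].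
    apply fl_max. rewrite mult_IZR, <- INR_IZR_INZ. nra.
  - assert (Int_part (y * INR n) < Z.of_nat n * Int_part y + Z.of_nat n)%Z; [|lia].
    apply lt_IZR. rewrite plus_IZR, mult_IZR, <- INR_IZR_INZ.
    pose proof (fl_le (y * INR n)). nra.
Qed.

Definition Fz (n : nat) (xi : R) (k : Z) : Z := Int_part (xi * powerRZ (INR n) k).
Definition dig (n : nat) (xi : R) (i : Z) : nat :=
  Z.to_nat (Fz n xi (- i) - Z.of_nat n * Fz n xi (- i - 1)).

Lemma Fz_succ n xi k : (2 <= n)%nat ->
  xi * powerRZ (INR n) (k + 1) = (xi * powerRZ (INR n) k) * INR n.
Proof.
  intros hn. assert (hb : 2 <= INR n) by (apply (le_INR 2); lia).
  rewrite powerRZ_add by lra. simpl. ring.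
Qed.

Lemma dig_Z n xi i : (2 <= n)%nat ->
  (0 <= Fz n xi (- i) - Z.of_nat n * Fz n xi (- i - 1) <= Z.of_nat n - 1)%Z.
Proof.
  intros hn. unfold Fz.
  assert (E : (xi * powerRZ (INR n) (- i)) = xi * powerRZ (INR n) (- i - 1) * INR n).
  { rewrite <- Fz_succ by exact hn. f_equal. f_equal. lia. }
  rewrite E. apply digit_bound; exact hn.
Qed.

Lemma dig_INR n xi i : (2 <= n)%nat ->
  INR (dig n xi i) = IZR (Fz n xi (- i)) - INR n * IZR (Fz n xi (- i - 1)).
Proof.
  intros hn. unfold dig. rewrite INR_IZR_INZ, Z2Nat.id by (pose proof (dig_Z n xi i hn); lia).
  rewrite minus_IZR, mult_IZR, <- INR_IZR_INZ. ring.
Qed.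

Lemma pow_Z b m : powerRZ b (Z.of_nat m) = b ^ m.
Proof. now rewrite pow_powerRZ. Qed.
Lemma pow_negZ b m : powerRZ b (- Z.of_nat m) = / b ^ m.
Proof. now rewrite powerRZ_neg', pow_powerRZ. Qed.

Lemma geom_ev b (hb : 2 <= b) (e : R) : 0 < e ->
  exists N, forall m, (N <= m)%nat -> / b ^ m < e.
Proof.
  intros he. assert (Hl := is_lim_seq_geom (/ b)).
  assert (Rabs (/ b) < 1).
  { rewrite Rabs_pos_eq. apply (Rmult_lt_reg_l b); [lra|]. rewrite Rinv_r; lra.
    left; apply Rinv_0_lt_compat; lra. }
  specialize (Hl H). apply is_lim_seq_spec in Hl. destruct (Hl (mkposreal e he)) as [N HN].
  exists N. intros m hm. specialize (HN m hm). simpl in HN.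
  rewrite <- pow_inv. rewrite Rminus_0_r in HN. apply Rabs_def2 in HN. lra.
Qed.

Lemma pow_pos' b m : 2 <= b -> 0 < b ^ m.
Proof. intros; apply pow_lt; lra. Qed.

Lemma expansion_exists n xi : (2 <= n)%nat -> 0 <= xi -> exists d, is_expansion n xi d.
Proof.
  intros hn hxi. assert (hb : 2 <= INR n) by (apply (le_INR 2); lia).
  set (b := INR n) in *.
  exists (dig n xi). split; [|split].
  - intros i. pose proof (dig_Z n xi i hn). unfold dig. lia.
  - intros N. apply NNPP. intros Hc.
    assert (H : forall i, (i < N)%Z -> (i < 0)%Z -> dig n xi i = (n - 1)%nat).
    { intros i h1 h2. apply NNPP. intros h3. apply Hc. exists i. auto. }
    clear Hc.
    set (K := Z.to_nat (Z.abs N)).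
    set (Gn := fun m : nat => Int_part (xi * b ^ m)).
    assert (HG : forall m, Fz n xi (Z.of_nat m) = Gn m).
    { intros m. unfold Fz, Gn. now rewrite pow_Z. }
    assert (Hrec : forall j, Gn (K + S j)%nat = (Z.of_nat n * Gn (K + j)%nat + (Z.of_nat n - 1))%Z).
    { intros j. specialize (H (- Z.of_nat (K + S j))%Z ltac:(lia) ltac:(lia)).
      pose proof (dig_Z n xi (- Z.of_nat (K + S j))%Z hn).
      unfold dig in H.
      replace (- - Z.of_nat (K + S j))%Z with (Z.of_nat (K + S j)) in * by lia.
      replace (Z.of_nat (K + S j) - 1)%Z with (Z.of_nat (K + j)) in * by lia.
      rewrite !HG in *. lia. }
    assert (Hpow : forall j, IZR (Gn (K + j)%nat) + 1 = b ^ j * (IZR (Gn K) + 1)).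
    { induction j.
      - rewrite Nat.add_0_r. simpl. ring.
      - rewrite Hrec, plus_IZR, mult_IZR, minus_IZR, <- INR_IZR_INZ.
        fold b. change (b ^ S j) with (b * b ^ j). rewrite Rmult_assoc, <- IHj. ring. }
    set (delta := IZR (Gn K) + 1 - xi * b ^ K).
    assert (hd : 0 < delta) by (unfold delta, Gn; pose proof (fl_gt (xi * b ^ K)); lra).
    destruct (geom_ev b hb delta hd) as [M HM].
    specialize (HM M (Nat.le_refl _)).
    pose proof (fl_le (xi * b ^ (K + M))). fold (Gn (K + M)%nat) in H0.
    assert (IZR (Gn (K + M)%nat) = b ^ M * (IZR (Gn K) + 1) - 1) by (rewrite <- Hpow; ring).
    rewrite H1, pow_add in H0.
    assert (b ^ M * delta <= 1) by (unfold delta; nra).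
    pose proof (pow_pos' b M hb).
    apply (Rmult_lt_compat_l (b ^ M)) in HM; [|lra]. rewrite Rinv_r in HM; lra.
  -
    set (h := fun i : Z => IZR (Fz n xi (- i)) * powerRZ b i).
    assert (Hdt : forall i, digit_terms n (dig n xi) i = h i - h (i + 1)%Z).
    { intros i. unfold digit_terms, h. rewrite dig_INR by exact hn. fold b.
      replace (- (i + 1))%Z with (- i - 1)%Z by lia.
      rewrite powerRZ_add by lra. simpl. ring. }
    apply is_lim_seq_ext with (u := fun M => h (- Z.of_nat M)%Z - h (Z.of_nat M + 1)%Z).
    { intros M. rewrite (zsum_ext _ _ _ Hdt). now rewrite zsum_tele. }
    replace (Finite xi) with (Finite (xi - 0)) by (f_equal; ring).
    apply is_lim_seq_minus'.
    + apply is_lim_seq_le_le with (u := fun M => xi - (/ b) ^ M) (w := fun _ => xi).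
      * intros M. unfold h. rewrite Z.opp_involutive, pow_negZ. unfold Fz. rewrite pow_Z. fold b.
        pose proof (fl_le (xi * b ^ M)). pose proof (fl_gt (xi * b ^ M)).
        pose proof (pow_pos' b M hb). rewrite pow_inv. split.
        -- apply (Rmult_le_reg_r (b ^ M)); [lra|].
           rewrite Rmult_minus_distr_r, !Rmult_assoc, Rinv_l by lra. lra.
        -- apply (Rmult_le_reg_r (b ^ M)); [lra|].
           rewrite !Rmult_assoc, Rinv_l by lra. lra.
      * replace (Finite xi) with (Finite (xi - 0)) by (f_equal; ring). apply is_lim_seq_minus'.
        apply is_lim_seq_const. apply is_lim_seq_geom.
        rewrite Rabs_pos_eq. apply (Rmult_lt_reg_l b); [lra|]. rewrite Rinv_r; lra.
        left; apply Rinv_0_lt_compat; lra.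
      * apply is_lim_seq_const.
    + apply is_lim_seq_ext_loc with (u := fun _ => 0); [|apply is_lim_seq_const].
      destruct (geom_ev b hb (/ (xi + 1))) as [N HN]. apply Rinv_0_lt_compat; lra.
      exists N. intros M hM. unfold h.
      replace (- (Z.of_nat M + 1))%Z with (- Z.of_nat (S M))%Z by lia.
      unfold Fz. rewrite pow_negZ. fold b.
      rewrite fl_zero. simpl; ring.
      specialize (HN (S M) ltac:(lia)).
      pose proof (pow_pos' b (S M) hb).
      assert (0 < / b ^ S M) by (apply Rinv_0_lt_compat; lra).
      split. nra.
      apply (Rmult_lt_compat_l (xi + 1)) in HN; [|lra]. rewrite Rinv_r in HN; nra.
Qed.

Lemma lim_scal (u : nat -> R) a (l : R) : is_lim_seq u l -> is_lim_seq (fun n => a * u n) (a * l).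
Proof. intros H. exact (is_lim_seq_scal_l u a l H). Qed.

Lemma dt_nonneg n d i : (2 <= n)%nat -> 0 <= digit_terms n d i.
Proof.
  intros hn. unfold digit_terms. apply Rmult_le_pos. apply pos_INR.
  left; apply powerRZ_lt. apply (lt_INR 0); lia.
Qed.

Lemma dt_to0 n xi d : (2 <= n)%nat -> is_expansion n xi d ->
  is_lim_seq (fun M => digit_terms n d (Z.of_nat M)) 0.
Proof.
  intros hn [_ [_ Hl]].
  apply is_lim_seq_incr_1.
  apply is_lim_seq_le_le with (u := fun _ => 0) (w := fun M => zsum (digit_terms n d) (S M) - zsum (digit_terms n d) M).
  - intros M. split. apply dt_nonneg; auto.
    rewrite zsum_S. pose proof (dt_nonneg n d (- (Z.of_nat M + 1))%Z hn).
    replace (Z.of_nat (S M)) with (Z.of_nat M + 1)%Z by lia. lra.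
  - apply is_lim_seq_const.
  - replace (Finite 0) with (Finite (xi - xi)) by (f_equal; ring).
    apply is_lim_seq_minus'; auto. now apply is_lim_seq_incr_1 in Hl.
Qed.

Theorem lemma1 (p q : nat) (hp : (2 <= p)%nat) (hq : (2 <= q)%nat)
  (hpq : Nat.gcd p q = 1%nat) (xi : R) (hxi : 0 <= xi) :
  real_n (p * q) (G p q (config (p * q) xi)) = INR p * xi.
Proof.
  assert (hn : (2 <= p * q)%nat) by nia.
  set (n := (p * q)%nat) in *.
  assert (hb : 2 <= INR n) by (apply (le_INR 2); lia).
  set (b := INR n) in *.
  assert (bpq : b = INR p * INR q) by (unfold b, n; apply mult_INR).
  assert (Hd : is_expansion n xi (digits n xi)).
  { unfold digits. apply epsilon_spec. apply expansion_exists; auto. }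
  set (d := digits n xi) in *.
  set (A := fun i => INR (d i mod q) * powerRZ b i).
  set (C := fun i => INR (d i / q) * powerRZ b i).
  set (e := fun i => G p q (config n xi) (- i)%Z).
  assert (Pe : forall i, digit_terms n e i = INR p * A i + (INR p * INR q) * C (i - 1)%Z).
  { intros i. unfold digit_terms, e, G, config, g, A, C. fold b. fold d.
    rewrite Z.opp_involutive. replace (- (- i + 1))%Z with (i - 1)%Z by lia.
    assert (E : powerRZ b i = powerRZ b (i - 1) * powerRZ b 1).
    { rewrite <- powerRZ_add by lra. f_equal. lia. }
    rewrite E, plus_INR, mult_INR. simpl. rewrite <- bpq. ring. }
  assert (Pd : forall i, digit_terms n d i = A i + INR q * C i).
  { intros i. unfold digit_terms, A, C. fold b.
    rewrite (Nat.div_mod_eq (d i) q) at 1. rewrite plus_INR, mult_INR. ring. }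
  assert (E1 : forall M, zsum (digit_terms n e) M =
     INR p * zsum (digit_terms n d) M + (INR p * INR q) * (C (- Z.of_nat M - 1)%Z - C (Z.of_nat M))).
  { intros M. rewrite (zsum_ext _ _ M Pe), (zsum_ext _ _ M Pd).
    rewrite zsum_plus, zsum_plus, !zsum_scal, zsum_shift. ring. }
  unfold real_n. fold e.
  rewrite (is_lim_seq_unique _ (INR p * xi)). reflexivity.
  apply is_lim_seq_ext with (u := fun M => INR p * zsum (digit_terms n d) M + (INR p * INR q) * (C (- Z.of_nat M - 1)%Z - C (Z.of_nat M))).
  { intros M. now rewrite E1. }
  replace (INR p * xi) with (INR p * xi + (INR p * INR q) * (0 - 0)) by ring.
  apply is_lim_seq_plus'.
  - apply lim_scal. apply Hd.
  - apply lim_scal. apply is_lim_seq_minus'.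
    + apply is_lim_seq_le_le with (u := fun _ => 0) (w := fun M => (/ b) ^ M).
      * intros M. unfold C.
        replace (- Z.of_nat M - 1)%Z with (- Z.of_nat (S M))%Z by lia.
        rewrite pow_negZ, pow_inv.
        pose proof (pow_pos' b M hb).
        assert (hdq : (d (- Z.of_nat (S M))%Z / q <= d (- Z.of_nat (S M))%Z)%nat).
        { pose proof (Nat.div_mod_eq (d (- Z.of_nat (S M))%Z) q). nia. }
        assert (hdn : (d (- Z.of_nat (S M))%Z < n)%nat) by apply Hd.
        apply le_INR in hdq. apply lt_INR in hdn. fold b in hdn.
        pose proof (pos_INR (d (- Z.of_nat (S M))%Z / q)).
        change (b ^ S M) with (b * b ^ M).
        split. apply Rmult_le_pos; auto. left; apply Rinv_0_lt_compat; nra.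
        rewrite Rinv_mult.
        apply (Rmult_le_reg_l (b * b ^ M)). nra.
        field_simplify; try lra. 
      * apply is_lim_seq_const.
      * apply is_lim_seq_geom. rewrite Rabs_pos_eq. apply (Rmult_lt_reg_l b); [lra|]. rewrite Rinv_r; lra.
        left; apply Rinv_0_lt_compat; lra.
    + apply is_lim_seq_le_le with (u := fun _ => 0) (w := fun M => digit_terms n d (Z.of_nat M)).
      * intros M. unfold C, digit_terms. fold b.
        pose proof (powerRZ_lt b (Z.of_nat M) ltac:(lra)).
        assert (hdq : (d (Z.of_nat M) / q <= d (Z.of_nat M))%nat).
        { pose proof (Nat.div_mod_eq (d (Z.of_nat M)) q). nia. }
        apply le_INR in hdq. pose proof (pos_INR (d (Z.of_nat M) / q)).
        split; nra.
      * apply is_lim_seq_const.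
      * eapply dt_to0; eauto.
Qed.
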